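(* Let $\mathcal{G}^2_6$ be the $3$-graph on $[6]$ whose edges are all $3$-subsets of $[6]$ except $\{1,2,3\},\{1,2,6\},\{3,4,5\},\{4,5,6\}$. Then $\lambda(\mathcal{G}^2_6)\le 2/27$.
   Context: For a $3$-graph $\mathcal{T}$ on $[s]$, $p_{\mathcal{T}}(x)=\sum_{E\in\mathcal{T}}\prod_{i\in E}x_i$ and the Lagrangian is $\lambda(\mathcal{T})=\max\{p_{\mathcal{T}}(x): x\in\mathbb{R}^s,\ x_i\ge0,\ \sum_i x_i=1\}$. *)

(* Defs.v *)
From mathcomp Require Import all_boot all_order all_algebra.
Set Implicit Arguments. Unset Strict Implicit. Unset Printing Implicit Defensive.
Import Order.TTheory GRing.Theory Num.Theory.
Local Open Scope ring_scope.

(* Vertices [s] = {1,...,s} are represented by 'I_s = {0,...,s-1};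
   vertex k of the paper is the ordinal k-1. *)

Definition is_3graph (s : nat) (T : {set {set 'I_s}}) : bool :=
  [forall E in T, #|E| == 3%N].

Definition lagr_poly (R : numDomainType) (s : nat) (T : {set {set 'I_s}})
    (x : 'I_s -> R) : R :=
  \sum_(E in T) \prod_(i in E) x i.

Definition in_simplex (R : numDomainType) (s : nat) (x : 'I_s -> R) : Prop :=
  (forall i, 0 <= x i) /\ \sum_(i < s) x i = 1.

(* "lambda(T) <= c": the maximum of p_T over the simplex is at most c,
   i.e. every value of p_T on the simplex is at most c. *)
Definition lagrangian_le (R : numDomainType) (s : nat) (T : {set {set 'I_s}})
    (c : R) : Prop :=
  forall x : 'I_s -> R, in_simplex x -> lagr_poly T x <= c.

Definition v6 (k : nat) : 'I_6 := inord k.-1.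

Definition G26 : {set {set 'I_6}} :=
  [set E : {set 'I_6} | (#|E| == 3%N)
     && (E != [set v6 1; v6 2; v6 3])
     && (E != [set v6 1; v6 2; v6 6])
     && (E != [set v6 3; v6 4; v6 5])
     && (E != [set v6 4; v6 5; v6 6])].

(* Main.v *)
Require Import Defs.
From Stdlib Require Import PeanoNat.
From mathcomp Require Import all_boot all_order all_algebra.
From mathcomp Require Import lra.
Import Order.TTheory GRing.Theory Num.Theory.
Local Open Scope ring_scope.
Lemma enum_sorted (E : {set 'I_6}) :
  sorted (fun i j : 'I_6 => (val i < val j)%N) (enum E).
Proof.
rewrite /enum_mem -enumT; apply: sorted_filter.
  by move=> ???; apply: ltn_trans.
by have := iota_ltn_sorted 0 6; rewrite -val_enum_ord sorted_map.
Qed.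

Lemma enum3 (a b c : 'I_6) : (val a < val b)%N -> (val b < val c)%N ->
  enum [set a; b; c] = [:: a; b; c].
Proof.
move=> hab hbc.
apply: (@irr_sorted_eq _ (fun i j : 'I_6 => (val i < val j)%N)).
- by move=> ???; apply: ltn_trans.
- by move=> i; rewrite /= ltnn.
- exact: enum_sorted.
- by rewrite /= hab hbc.
- by move=> i; rewrite mem_enum !inE orbA.
Qed.

Definition h (p : 'I_6 * 'I_6 * 'I_6) : {set 'I_6} := [set p.1.1; p.1.2; p.2].
Definition srt (p : 'I_6 * 'I_6 * 'I_6) : bool := (val p.1.1 < val p.1.2 < val p.2)%N.

Lemma h_inj p q : srt p -> srt q -> h p = h q -> p = q.
Proof.
case: p => [[a b] c]; case: q => [[d e] f] /andP[h1 h2] /andP[h3 h4] /= E.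
have := @enum3 a b c h1 h2; rewrite /h /= in E; rewrite E enum3 //.
by case=> -> -> ->.
Qed.

Definition condb (a b c : nat) : bool :=
  Nat.ltb a b && Nat.ltb b c &&
  ~~ ((Nat.eqb a 0 && Nat.eqb b 1 && Nat.eqb c 2) ||
      (Nat.eqb a 0 && Nat.eqb b 1 && Nat.eqb c 5) ||
      (Nat.eqb a 2 && Nat.eqb b 3 && Nat.eqb c 4) ||
      (Nat.eqb a 3 && Nat.eqb b 4 && Nat.eqb c 5)).

Lemma ltbE m n : Nat.ltb m n = (m < n)%N.
Proof. by apply/idP/idP => [/Nat.ltb_lt/ssrnat.ltP | /ssrnat.ltP/Nat.ltb_lt]. Qed.
Lemma eqbE m n : Nat.eqb m n = (m == n).
Proof. by apply/idP/idP => [/Nat.eqb_eq/eqP | /eqP/Nat.eqb_eq]. Qed.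

Definition cond (p : 'I_6 * 'I_6 * 'I_6) := condb (val p.1.1) (val p.1.2) (val p.2).

Lemma cond_srt p : cond p -> srt p.
Proof. by rewrite /cond /condb /srt !ltbE => /andP[/andP[-> ->]]. Qed.

Lemma v6E k : (0 < k <= 6)%N -> val (v6 k) = k.-1.
Proof. by case: k => // k /= hk; rewrite inordK. Qed.

Lemma hv6 i j k : h (v6 i, v6 j, v6 k) = [set v6 i; v6 j; v6 k].
Proof. by []. Qed.

Lemma memG26 p : srt p -> (h p \in G26) = cond p.
Proof.
move=> sp.
have c3 : #|h p| = 3%N.
  by case: p sp => [[a b] c] /andP[h1 h2]; rewrite cardE enum3.
rewrite inE c3 eqxx /= -!hv6.
have ne q : srt q -> (h p == h q) = (p == q).
  by move=> sq; apply/eqP/eqP => [/(h_inj _ _ sp sq) | ->].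
rewrite !ne; try by rewrite /srt /= !v6E.
case: p sp {c3 ne} => [[a b] c] /andP[h1 h2].
rewrite /cond /condb !ltbE h1 h2 !eqbE /= !xpair_eqE -!val_eqE /= !v6E //.
by rewrite -!negb_or.
Qed.

Lemma G26E : G26 = h @: [set p | cond p].
Proof.
apply/setP => E; apply/idP/imsetP.
  move=> EG; have := EG; rewrite inE => /andP[/andP[/andP[/andP[c3 _] _] _] _].
  have: size (enum E) = 3%N by rewrite -cardE (eqP c3).
  have sE := enum_sorted E.
  case eE: (enum E) sE => [|a [|b [|c [|]]]] //= /andP[h1 /andP[h2 _]] _.
  have EE : E = h (a, b, c).
    by rewrite -[E]set_enum eE; apply/setP => i; rewrite !inE orbA.
  exists (a, b, c) => //; rewrite inE -memG26 -?EE //; exact/andP.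
by case=> p; rewrite inE => cp ->; rewrite memG26 ?cond_srt.
Qed.

Lemma lagrE (R : realFieldType) (x : 'I_6 -> R) :
  lagr_poly G26 x =
  \sum_(a < 6) \sum_(b < 6) \sum_(c < 6)
     (if condb a b c then x (inord a) * x (inord b) * x (inord c) else 0).
Proof.
rewrite /lagr_poly G26E big_imset; last first.
  by move=> p q; rewrite !inE => /cond_srt sp /cond_srt sq; apply: h_inj.
rewrite pair_big /= pair_big /= big_mkcond [RHS]big_mkcond /=.
apply: eq_bigr => [[[a b] c]] _; rewrite inE /cond /=.
case cp: (condb _ _ _) => //.
have /andP[h1 h2] := @cond_srt (a, b, c) cp.
rewrite /h /= -setUA big_setU1 /=; last by rewrite !inE -!val_eqE /= !ltn_eqF // (ltn_trans h1 h2).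
rewrite big_setU1 /=; last by rewrite !inE -!val_eqE /= !ltn_eqF.
by rewrite big_set1 !inord_val mulrA.
Qed.


Lemma fin (R : realFieldType) (y0 y1 y2 y3 y4 y5 : R) :
  0 <= y0 -> 0 <= y1 -> 0 <= y2 -> 0 <= y3 -> 0 <= y4 -> 0 <= y5 ->
  y0 + y1 + y2 + y3 + y4 + y5 = 1 ->
  y0*y1*y3 + y0*y1*y4 + y0*y2*y3 + y0*y2*y4 + y0*y2*y5 + y0*y3*y4 + y0*y3*y5 + y0*y4*y5
  + y1*y2*y3 + y1*y2*y4 + y1*y2*y5 + y1*y3*y4 + y1*y3*y5 + y1*y4*y5 + y2*y3*y5 + y2*y4*y5
  <= 2/27.
Proof.
move=> h0 h1 h2 h3 h4 h5 hs.
set a := y0 + y1; set b := y3 + y4; set c := y2 + y5; set u := a + b.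
have ha : 0 <= a by rewrite addr_ge0.
have hb : 0 <= b by rewrite addr_ge0.
have hc : 0 <= c by rewrite addr_ge0.
have hu : 0 <= u by rewrite addr_ge0.
have e1 : 0 <= b * (y0 - y1)^+2 by rewrite mulr_ge0 ?sqr_ge0.
have e2 : 0 <= a * (y3 - y4)^+2 by rewrite mulr_ge0 ?sqr_ge0.
have e3 : 0 <= u * (y2 - y5)^+2 by rewrite mulr_ge0 ?sqr_ge0.
have e4 : 0 <= (c + u/4) * (a - b)^+2.
  by apply: mulr_ge0; [lra | exact: sqr_ge0].
have e5 : 0 <= (u - 2/3 * (a + b + c))^+2 * (8/3 * c + 5/3 * u).
  by apply: mulr_ge0; [exact: sqr_ge0 | lra].
have hs' : a + b + c = 1 by rewrite /a /b /c; lra.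
have hs3 : (a + b + c)^+3 = 1 by rewrite hs' expr1n.
rewrite /u /a /b /c in e1 e2 e3 e4 e5 hs3.
lra.
Qed.

Theorem lemma4p2 (R : realFieldType) :
  lagrangian_le (R:=R) G26 (2 / 27).
Proof.
move=> x [hx hs].
rewrite lagrE !big_ord_recr !big_ord0 /=.
rewrite !(addr0, add0r).
rewrite (eq_bigr (fun i : 'I_6 => x (inord i))) in hs; last by move=> i _; rewrite inord_val.
rewrite !big_ord_recr big_ord0 /= add0r in hs.
have := @fin R (x (inord 0)) (x (inord 1)) (x (inord 2)) (x (inord 3)) (x (inord 4)) (x (inord 5))
  (hx _) (hx _) (hx _) (hx _) (hx _) (hx _) ltac:(rewrite -hs; lra).
lra.
Qed.
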